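(* Let $K\ge 2$ be a power of two. $K$-way LCP-mergesort, as described in the context, sorts any set $\mathcal S$ of $n$ strings and computes its LCP array $H$ using fewer than $L(H) + n\lceil\log_K n\rceil\log_2 K + n + \lceil\frac{n-1}{K-1}\rceil$ character comparisons, and runs in $O(D+n\log n)$ time.
   Context: Strings are zero-terminated finite sequences over a totally ordered alphabet, ordered lexicographically; $\mathrm{lcp}(s,t)$ is the length of their longest common prefix. For a sorted sequence $s_1\le\dots\le s_n$ its LCP array is $H=(\bot,h_2,\dots,h_n)$, $h_i=\mathrm{lcp}(s_{i-1},s_i)$, and $L(H)=\sum_{i\ge 2}h_i$. The distinguishing prefix size $D$ is the sum over all $s\in\mathcal S$ of the length of the shortest prefix of $s$ that is not a prefix of any other string of $\mathcal S$ ($D\ge L(H)$). $K$-way LCP-merge is the procedure merging $K$ sorted sequences with LCP arrays via an LCP-aware tournament tree: $K$ calls of LCP-Compare to build the tree and $\log_2 K$ calls per output string to replay the leaf-to-root path of the previous winner, where LCP-Compare on $(a,s_a,h_a),(b,s_b,h_b)$ with $h_a=\mathrm{lcp}(p,s_a)$, $h_b=\mathrm{lcp}(p,s_b)$, $p\le s_a,s_b$ decides by the LCPs when $h_a\ne h_b$ (the string with larger LCP is smaller; resulting lcp is $\min(h_a,h_b)$) and otherwise compares characters from position $h_a+1$ on until a mismatch or terminator; it returns the smaller index with its LCP, and the larger index with $\mathrm{lcp}(s_a,s_b)$. Counting convention: each character comparison yielding equality counts one; the final mismatch test counts one; the LCP-only cases count zero. $K$-way LCP-mergesort: a set of size at most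 1 is returned with trivial LCP array; otherwise the input is split into $K$ parts of nearly equal size (some possibly empty when $n<K$), each part is sorted recursively together with its LCP array, and the $K$ results are combined by one $K$-way LCP-merge (used at every level, including when $n<K$). *)

(* Defs.v *)
From HB Require Import structures.
From mathcomp Require Import all_boot all_order.
Set Implicit Arguments. Unset Strict Implicit. Unset Printing Implicit Defensive.
Import Order.TTheory.

Section LCPMergesort.
Context {d : Order.disp_t} {T : orderType d}.

(* Strings over the totally ordered alphabet T.  The zero terminator is
   implicit: it sits at position [size s] and is smaller than every character. *)
Definition str := seq T.

Definition str_le (x y : str) : bool := @Order.le _ (seqlexi T) x y.

Fixpoint lcp (s t : str) : nat :=
  match s, t with
  | x :: s', y :: t' => if x == y then (lcp s' t').+1 else 0
  | _, _ => 0
  end.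

(* LCP array H = (bot, h_2, ..., h_n); bot is represented by 0. *)
Definition lcp_array (ss : seq str) : seq nat :=
  if ss is x :: r then 0 :: pairmap lcp x r else [::].

Definition LH (ss : seq str) : nat := sumn (behead (lcp_array ss)).

(* Distinguishing prefix size D.  Prefixes are taken of the zero-terminated
   string (terminator modelled by None). *)
Definition term (s : str) : seq (option T) := rcons (map Some s) None.

Definition dist_prefix_len (S : seq str) (s : str) : nat :=
  find (fun m => ~~ has (fun t => (t != s) && prefix (take m (term s)) (term t)) S)
       (iota 0 (size s).+2).

Definition Dsize (S : seq str) : nat := sumn (map (dist_prefix_len S) S).

(* LCP-Compare on (a, x, hx), (b, y, hy).  Returns
   (true iff x is the smaller one, lcp(x,y) (LCP given to the larger one),
    number of character comparisons). *)
Definition lcp_compare (x : str) (hx : nat) (y : str) (hy : nat) : bool * nat * nat :=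
  if hy < hx then (true, hy, 0)
  else if hx < hy then (false, hx, 0)
  else let l := lcp x y in (str_le x y, l, l - hx + 1).

(* Annotated sequences: strings with their LCP relative to the predecessor
   (for the first element: relative to the common reference string).
   Results are (output, character comparisons, other elementary steps). *)
Definition res := (seq (str * nat) * nat * nat)%type.

(* One internal node of the tournament tree: the matches played at one node
   are exactly an LCP-aware two-way merge of the outputs of its two
   subtrees.  An exhausted input acts as an infinite sentinel (no
   character comparisons). *)
Fixpoint merge2 (fuel : nat) (l1 l2 : seq (str * nat)) : res :=
  match fuel with
  | 0 => (l1 ++ l2, 0, 0)
  | f.+1 =>
    match l1 with
    | [::] => (l2, 0, size l2)
    | (x, hx) :: r1 =>
      match l2 with
      | [::] => (l1, 0, size l1)
      | (y, hy) :: r2 =>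
        let: (xw, hl, c) := lcp_compare x hx y hy in
        if xw then
          let: (o, c', t') := merge2 f r1 ((y, hl) :: r2) in
          ((x, hx) :: o, c + c', t'.+1)
        else
          let: (o, c', t') := merge2 f ((x, hl) :: r1) r2 in
          ((y, hy) :: o, c + c', t'.+1)
      end
    end
  end.

(* K-way LCP-merge with K = 2^k: the tournament tree with K leaves
   (left subtree on the first K/2 inputs, right subtree on the last K/2). *)
Fixpoint kmerge (k : nat) (ls : seq (seq (str * nat))) : res :=
  match k with
  | 0 => (head [::] ls, 0, 1)
  | k'.+1 =>
    let: (a, ca, ta) := kmerge k' (take (2 ^ k') ls) in
    let: (b, cb, tb) := kmerge k' (drop (2 ^ k') ls) in
    let: (m, cm, tm) := merge2 (size a + size b) a b in
    (m, ca + cb + cm, ta + tb + tm + 1)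
  end.

Definition part_size (K n i : nat) : nat := n %/ K + (i < n %% K).
Definition part_start (K n i : nat) : nat := i * (n %/ K) + minn i (n %% K).
Definition parts (K : nat) (s : seq str) : seq (seq str) :=
  mkseq (fun i => take (part_size K (size s) i) (drop (part_start K (size s) i) s)) K.

(* K-way LCP-mergesort, K = 2^k; [fuel] bounds the recursion depth
   (size s suffices). *)
Fixpoint msort (k fuel : nat) (s : seq str) : res :=
  match fuel with
  | 0 => ([seq (x, 0) | x <- s], 0, 1)
  | f.+1 =>
    if size s <= 1 then ([seq (x, 0) | x <- s], 0, 1) else
    let rs := [seq msort k f p | p <- parts (2 ^ k) s] in
    let: (m, cm, tm) := kmerge k [seq r.1.1 | r <- rs] in
    (m, sumn [seq r.1.2 | r <- rs] + cm,
        sumn [seq r.2 | r <- rs] + tm + size s + 2 ^ k + 1)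
  end.

Definition lcp_mergesort (k : nat) (S : seq str) : res := msort k (size S) S.

End LCPMergesort.

(* Main.v *)
Require Import Defs.
From HB Require Import structures.
From mathcomp Require Import all_boot all_order zify.
Set Implicit Arguments. Unset Strict Implicit. Unset Printing Implicit Defensive.
Import Order.TTheory.

Section S.
Context {d : Order.disp_t} {T : orderType d}.
Implicit Types x y p : seq T.

Lemma str_le_cons (a b : T) x y :
  str_le (a :: x) (b :: y) = (a <= b)%O && ((b <= a)%O ==> str_le x y).
Proof. by []. Qed.

Lemma str_le0 x : str_le [::] x. Proof. by []. Qed.
Lemma str_le_nil x : str_le x [::] = (x == [::]). Proof. by case: x. Qed.

Lemma str_le_total x y : str_le x y || str_le y x.
Proof. exact: (@le_total _ (seqlexi T)). Qed.

Lemma lcpC x y : lcp x y = lcp y x.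
Proof. by elim: x y => [|a x IH] [|b y] //=; rewrite eq_sym IH. Qed.

Lemma lcp_ge p x y : lcp p x = lcp p y -> lcp p x <= lcp x y.
Proof.
elim: p x y => [|a p IH] [|b x] [|c y] //=; first by case: ifP.
case ab: (a == b) => //; case ac: (a == c) => //.
by rewrite -(eqP ab) ac => -[] /IH.
Qed.

Lemma lcp_lt p x y : str_le p x -> str_le p y -> lcp p y < lcp p x ->
  str_le x y /\ lcp x y = lcp p y.
Proof.
elim: p x y => [|a p IH] [|b x] [|c y] //=.
rewrite !str_le_cons; case ab: (a == b); last by case: (a == c).
move/eqP: ab => <-; rewrite lexx /= => Hx.
case ac: (a == c).
  move/eqP: ac => <-; rewrite lexx /= => Hy.
  by rewrite ltnS => /(IH _ _ Hx Hy) [H1 H2]; rewrite ?lexx /= ?eqxx H1 H2.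
move=> /andP [Hac _] _; split=> //.
have lac : (a < c)%O by rewrite lt_neqAle ac Hac.
rewrite Hac /=; apply/implyP => Hca'.
by move: lac; rewrite lt_leAnge Hca' andbF.
Qed.

Lemma lcp_size x y : lcp x y <= size x.
Proof. elim: x y => [|a x IH] [|b y] //=; case: eqP => // _; exact: IH. Qed.

Definition termS (a : T) x : term (a :: x) = Some a :: term x.
Proof. by []. Qed.

Lemma take_lcp x y : take (lcp x y) (term x) = take (lcp x y) (term y).
Proof.
elim: x y => [|a x IH] [|b y] //=; case: eqP => //= <-; by rewrite IH.
Qed.


Fixpoint valid (p : seq T) (l : seq (seq T * nat)) : bool :=
  if l is (x, h) :: r then [&& str_le p x, h == lcp p x & valid x r] else true.

Definition sumh (l : seq (seq T * nat)) := sumn (map snd l).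

Lemma merge2_ok f p l1 l2 o c t : valid p l1 -> valid p l2 ->
  size l1 + size l2 <= f -> merge2 f l1 l2 = (o, c, t) ->
  [/\ valid p o, perm_eq (map fst o) (map fst l1 ++ map fst l2),
      size o = size l1 + size l2,
      c + sumh l1 + sumh l2 <= sumh o + size l1 + size l2
    & t <= size l1 + size l2].
Proof.
elim: f p l1 l2 o c t => [|f IH] p l1 l2 o c t.
  by case: l1 l2 => [|??] [|??] //= _ _ _ [<- <- <-].
case: l1 => [|[x hx] r1] /=.
  by move=> _ V2 _ [<- <- <-]; rewrite /sumh /= !add0n; split => //; lia.
case: l2 => [|[y hy] r2] /=.
  by move=> V1 _ _ [<- <- <-]; rewrite /sumh /= !addn0 cats0; split => //; lia.
move=> /and3P [px /eqP hxE V1] /and3P [py /eqP hyE V2] Hf.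
rewrite /lcp_compare.
case: (ltnP hy hx) => H1.
  have [xy lxy] : str_le x y /\ lcp x y = lcp p y by apply: lcp_lt; rewrite -?hxE -?hyE.
  case E: (merge2 f r1 ((y, hy) :: r2)) => [[o' c'] t'] [<- <- <-].
  have V2' : valid x ((y, hy) :: r2) by rewrite /= xy lxy hyE eqxx.
  have [] := IH _ _ _ _ _ _ V1 V2' _ E; first by rewrite /=; lia.
  move=> Vo Po So Co To; split.
  - by rewrite /= px hxE eqxx.
  - by rewrite /= perm_cons.
  - by rewrite /= So /=; lia.
  - by move: Co; rewrite /sumh /=; lia.
  - by move: To; rewrite /=; lia.
case: (ltnP hx hy) => H2.
  have [yx lyx] : str_le y x /\ lcp y x = lcp p x by apply: lcp_lt; rewrite -?hxE -?hyE.
  case E: (merge2 f ((x, hx) :: r1) r2) => [[o' c'] t'] [<- <- <-].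
  have V1' : valid y ((x, hx) :: r1) by rewrite /= yx lyx hxE eqxx.
  have [] := IH _ _ _ _ _ _ V1' V2 _ E; first by rewrite /= in Hf *; lia.
  move=> Vo Po So Co To; split.
  - by rewrite /= py hyE eqxx.
  - rewrite perm_sym (perm_catCA (map fst ((x, hx) :: r1)) [:: y]) /= perm_cons perm_sym; exact: Po.
  - by rewrite /= So /=; lia.
  - by move: Co; rewrite /sumh /=; lia.
  - by move: To; rewrite /=; lia.
have hxy : hx = hy by apply/eqP; rewrite eqn_leq H1 H2.
have lge : hx <= lcp x y by rewrite hxE; apply: lcp_ge; rewrite -hxE -hyE.
case: ifP => xy.
  case E: (merge2 f r1 ((y, lcp x y) :: r2)) => [[o' c'] t'] [<- <- <-].
  have V2' : valid x ((y, lcp x y) :: r2) by rewrite /= xy eqxx.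
  have [] := IH _ _ _ _ _ _ V1 V2' _ E; first by rewrite /=; lia.
  move=> Vo Po So Co To; split.
  - by rewrite /= px hxE eqxx.
  - by rewrite /= perm_cons.
  - by rewrite /= So /=; lia.
  - by move: Co; rewrite /sumh /=; lia.
  - by move: To; rewrite /=; lia.
have yx : str_le y x by move: (str_le_total x y); rewrite xy.
case E: (merge2 f ((x, lcp x y) :: r1) r2) => [[o' c'] t'] [<- <- <-].
have V1' : valid y ((x, lcp x y) :: r1) by rewrite /= yx lcpC eqxx.
have [] := IH _ _ _ _ _ _ V1' V2 _ E; first by rewrite /= in Hf *; lia.
move=> Vo Po So Co To; split.
- by rewrite /= py hyE eqxx.
- rewrite perm_sym (perm_catCA (map fst ((x, lcp x y) :: r1)) [:: y]) /= perm_cons perm_sym; exact: Po.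
- by rewrite /= So /=; lia.
- by move: Co; rewrite /sumh /=; lia.
- by move: To; rewrite /=; lia.
Qed.


Lemma size_take_le (A : Type) n (s : seq A) : size (take n s) <= n.
Proof. rewrite size_take; case: ifP => // /negbT; rewrite -leqNgt. done. Qed.

Lemma kmerge_ok k ls o c t : all (valid [::]) ls -> size ls <= 2 ^ k ->
  kmerge k ls = (o, c, t) ->
  [/\ valid [::] o, perm_eq (map fst o) (flatten (map (map fst) ls)),
      size o = sumn (map size ls),
      c + sumn (map sumh ls) <= sumh o + k * sumn (map size ls)
    & t < k * sumn (map size ls) + 2 ^ k.+1].
Proof.
elim: k ls o c t => [|k IH] ls o c t.
  case: ls => [|l [|??]] //= V _ [<- <- <-].
    by split => //; rewrite /sumh.
  move: V => /andP [V _]; split => //; rewrite ?cats0 ?addn0 //.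
set A := take (2 ^ k) ls; set B := drop (2 ^ k) ls.
have HAB : ls = A ++ B by rewrite cat_take_drop.
rewrite {1}HAB all_cat => /andP [VA VB] Hs /=.
have sA : size A <= 2 ^ k by apply: size_take_le.
have sB : size B <= 2 ^ k by rewrite size_drop; move: Hs; rewrite expnS; lia.
case E1: (kmerge k A) => [[a ca] ta].
case E2: (kmerge k B) => [[b cb] tb].
case E3: (merge2 (size a + size b) a b) => [[m cm] tm] [<- <- <-].
have [Va Pa Sa Ca Ta] := IH _ _ _ _ VA sA E1.
have [Vb Pb Sb Cb Tb] := IH _ _ _ _ VB sB E2.
have [Vm Pm Sm Cm Tm] := merge2_ok Va Vb (leqnn _) E3.
rewrite HAB !map_cat !sumn_cat flatten_cat; split => //.
- apply: (perm_trans Pm); exact: perm_cat.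
- by rewrite Sm Sa Sb.
- move: Ca Cb Cm; rewrite Sa Sb ?mulSn ?mulnDr; lia.
- move: Ta Tb Tm; rewrite Sa Sb !expnS ?mulSn ?mulnDr; lia.
Qed.


Lemma part_startS K n i : part_start K n i.+1 = part_start K n i + part_size K n i.
Proof. rewrite /part_start /part_size mulSn; lia. Qed.

Lemma flatten_parts_aux K (s : seq (seq T)) j :
  flatten (mkseq (fun i => take (part_size K (size s) i)
                    (drop (part_start K (size s) i) s)) j)
  = take (part_start K (size s) j) s.
Proof.
elim: j => [|j IH].
  have -> : part_start K (size s) 0 = 0 by rewrite /part_start; lia.
  by rewrite take0.
by rewrite mkseqS flatten_rcons IH part_startS takeD.
Qed.

Lemma flatten_parts K (s : seq (seq T)) : 0 < K -> flatten (parts K s) = s.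
Proof.
move=> K0; rewrite /parts flatten_parts_aux.
have -> : part_start K (size s) K = size s.
  rewrite /part_start.
  have h1 := ltn_pmod (size s) K0.
  have h2 := divn_eq (size s) K.
  rewrite (minn_idPr (ltnW h1)) mulnC; lia.
by rewrite take_size.
Qed.

Lemma part_size_le K n M i : 0 < K -> n <= K * M -> part_size K n i <= M.
Proof.
move=> K0 H; rewrite /part_size.
have h1 := ltn_pmod n K0.
have h2 := divn_eq n K.
set q := n %/ K in h2 *; set r := n %% K in h1 h2 *.
case: (ltnP i r) => Hi /=.
  suff : q < M by lia.
  rewrite -(ltn_pmul2l K0); nia.
rewrite addn0 -(leq_pmul2l K0); nia.
Qed.

Lemma parts_size_le K (s : seq (seq T)) (p : seq (seq T)) M : 0 < K -> size s <= K * M -> p \in (parts K s : seq (seq (seq T))) -> size p <= M.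
Proof.
move=> K0 H /mapP [i _ ->].
apply: leq_trans (size_take_le _ _) _; exact: part_size_le.
Qed.


Lemma sum_parts (g : seq (seq T) -> seq (seq T * nat) * nat * nat)
    (ps : seq (seq (seq T))) (k e A : nat) :
  (forall p : seq (seq T), p \in ps ->
     [/\ valid [::] (g p).1.1, perm_eq (map fst (g p).1.1) p, size (g p).1.1 = size p,
         (g p).1.2 <= sumh (g p).1.1 + k * size p * e
       & (g p).2 <= A * size p * e + 1]) ->
  [/\ all (valid [::]) [seq r.1.1 | r <- map g ps],
      perm_eq (flatten (map (map fst) [seq r.1.1 | r <- map g ps])) (flatten ps),
      sumn (map size [seq r.1.1 | r <- map g ps]) = sumn (map size ps),
      sumn [seq r.1.2 | r <- map g ps] <=
        sumn (map sumh [seq r.1.1 | r <- map g ps]) + k * sumn (map size ps) * e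
    & sumn [seq r.2 | r <- map g ps] <= A * sumn (map size ps) * e + size ps].
Proof.
elim: ps => [|p ps IH] H //=.
have [V1 P1 S1 C1 T1] := H p (mem_head _ _).
have [|V2 P2 S2 C2 T2] := IH.
  by move=> q Hq; apply: H; rewrite inE Hq orbT.
split.
- by rewrite V1 V2.
- exact: perm_cat.
- by rewrite S1 S2.
- move: C1 C2; rewrite !mulnDr !mulnDl; lia.
- move: T1 T2; rewrite !mulnDr !mulnDl; lia.
Qed.

Lemma msort_ok k f s o c t : 0 < k -> size s <= f -> msort k f s = (o, c, t) ->
  [/\ valid [::] o, perm_eq (map fst o) s, size o = size s,
      c <= sumh o + k * size s * up_log (2 ^ k) (size s)
    & t <= (4 * 2 ^ k + k + 1) * size s * up_log (2 ^ k) (size s) + 1].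
Proof.
move=> k0; set K := 2 ^ k; set A := 4 * K + k + 1.
have K2 : 1 < K by rewrite /K -{1}(expn0 2) ltn_exp2l.
have K0 : 0 < K by apply: ltnW.
have leaf : forall s : seq (seq T), size s <= 1 ->
  [/\ valid [::] [seq (x, 0) | x <- s], perm_eq (map fst [seq (x, 0) | x <- s]) s,
      size [seq (x, 0) | x <- s] = size s,
      0 <= sumh [seq (x, 0) | x <- s] + k * size s * up_log K (size s)
    & 1 <= A * size s * up_log K (size s) + 1].
  move=> s0 Hs; rewrite -map_comp map_id size_map perm_refl; split => //; last by lia.
  by case: s0 Hs => [|x [|??]].
elim: f s o c t => [|f IH] s o c t.
  by rewrite leqn0 => /eqP Hs [<- <- <-]; apply: leaf; rewrite Hs.
move=> Hsf /=; case: (leqP (size s) 1) => Hs.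
  by move=> [<- <- <-]; apply: leaf.
case E: (kmerge _ _) => [[m cm] tm] [<- <- <-].
set e := up_log K (size s).
have e1 : 0 < e by rewrite /e up_log_gt0 K2.
have sKe : size s <= K * K ^ e.-1 by rewrite -expnS prednK // /e up_logP.
have Hpart : forall p : seq (seq T), p \in (parts K s : seq (seq (seq T))) ->
  [/\ valid [::] (msort k f p).1.1, perm_eq (map fst (msort k f p).1.1) p,
      size (msort k f p).1.1 = size p,
      (msort k f p).1.2 <= sumh (msort k f p).1.1 + k * size p * e.-1
    & (msort k f p).2 <= A * size p * e.-1 + 1].
  move=> p Hp.
  have Hpf : size p <= f.
    have : size p <= (size s).-1.
      apply: (parts_size_le K0 _ Hp).
      apply: (@leq_trans (2 * (size s).-1)).
        by move: Hs; case: (size s) => //= n; lia.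
      by apply: leq_mul.
    by move: Hsf; lia.
  have Hpu : up_log K (size p) <= e.-1.
    apply: up_log_min => //; exact: (parts_size_le K0 sKe Hp).
  case Ep: (msort k f p) => [[op cp] tp].
  have [V P S C Tb] := IH _ _ _ _ Hpf Ep.
  split => //=.
  - apply: leq_trans C _; rewrite leq_add2l; apply: leq_mul => //.
  - apply: leq_trans Tb _; rewrite leq_add2r; apply: leq_mul => //.
have [V P S C Tb] := sum_parts Hpart.
have HK : size [seq r.1.1 | r <- [seq msort k f q | q <- parts K s]] <= 2 ^ k.
  by rewrite !size_map size_iota.
have [Vm Pm Sm Cm Tm] := kmerge_ok V HK E.
have Hfl : flatten (parts K s) = s by apply: flatten_parts.
have Hsz : sumn (map size (parts K s)) = size s.
  by rewrite -{2}Hfl size_flatten.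
rewrite Hsz in S C Tb.
split => //.
- apply: (perm_trans Pm); rewrite -{2}Hfl; exact: P.
- by rewrite Sm S.
- move: C Cm; rewrite S -/K -/e.
  have -> : k * size s * e = k * size s * e.-1 + k * size s.
    by rewrite -mulnSr prednK.
  set a := sumn [seq r.1.2 | r <- _]; set b := sumn [seq sumh i | i <- _]; lia.
- rewrite size_map size_iota in Tb.
  move: Tb Tm; rewrite S -/K -/e expnS -/K.
  have -> : A * size s * e = A * size s * e.-1 + A * size s.
    by rewrite -mulnSr prednK.
  have : 4 * K + k * size s + size s <= A * size s.
    rewrite /A !mulnDl; nia.
  set a := sumn [seq r.2 | r <- _]; lia.
Qed.


Lemma find_gt (A : Type) (P : pred A) (x0 : A) xs h : h < size xs ->
  (forall i, i <= h -> ~~ P (nth x0 xs i)) -> h < find P xs.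
Proof.
move=> Hh H; rewrite ltnNge; apply/negP => Hf.
have Hlt : find P xs < size xs by lia.
have := nth_find x0 (_ : has P xs); rewrite has_find => /(_ Hlt).
by rewrite (negbTE (H _ Hf)).
Qed.

Lemma dist_gt (S : seq (seq T)) s t : t \in S -> t != s ->
  lcp t s < dist_prefix_len S s.
Proof.
move=> tS ts; rewrite /dist_prefix_len.
have hs : lcp t s <= size s by rewrite lcpC lcp_size.
apply: (@find_gt _ _ 0) => [|i Hi]; first by rewrite size_iota ltnS; apply: leq_trans hs (leqnSn _).
rewrite nth_iota /=; last by rewrite ltnS; apply: leq_trans Hi (leq_trans hs (leqnSn _)).
rewrite add0n negbK; apply/hasP; exists t => //; rewrite ts /=.
rewrite -(take_takel _ Hi) -take_lcp.
apply: prefix_trans (prefix_take _ _) (prefix_take _ _).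
Qed.

Lemma pairmap_le (S : seq (seq T)) x r : uniq (x :: r) -> all (mem S) (x :: r) ->
  sumn (pairmap lcp x r) <= sumn (map (dist_prefix_len S) r).
Proof.
elim: r x => [|y r IH] x //= /andP [nx u] /and3P [xS yS aS].
rewrite leq_add //.
  apply: ltnW; apply: dist_gt => //.
  by apply: contra nx => /eqP ->; rewrite inE eqxx.
apply: IH => //=; by rewrite yS.
Qed.

Lemma LH_le_D (S out : seq (seq T)) : uniq S -> perm_eq out S -> LH out <= Dsize S.
Proof.
move=> uS P; rewrite /Dsize -(perm_sumn (perm_map _ P)) /LH.
case: out P => [|x r] P //=.
apply: leq_trans (leq_addl _ _).
apply: pairmap_le; first by rewrite (perm_uniq P).
by apply/allP => y Hy; rewrite /= -(perm_mem P).
Qed.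

Lemma valid_path p o : valid p o -> path str_le p (map fst o).
Proof. by elim: o p => [|[x h] o IH] p //= /and3P [-> _ /IH]. Qed.

Lemma valid_lcp p o : valid p o -> map snd o = pairmap lcp p (map fst o).
Proof. by elim: o p => [|[x h] o IH] p //= /and3P [_ /eqP -> /IH ->]. Qed.

Lemma valid0 o : valid [::] o ->
  [/\ sorted str_le (map fst o), map snd o = lcp_array (map fst o)
    & sumh o = LH (map fst o)].
Proof.
case: o => [|[x h] o]; first by split.
rewrite /valid -/valid => /and3P [_ /eqP hE V].
have := valid_lcp V; have := valid_path V.
rewrite /sumh /LH /= hE => -> ->; split => //.
Qed.


End S.

Theorem mainTheorem5 (d : Order.disp_t) (T : orderType d) (k : nat) :
  0 < k ->
  exists C : nat, forall S : seq (seq T), uniq S -> 0 < size S ->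
    let n := size S in
    let K := 2 ^ k in
    let r := lcp_mergesort k S in
    let out := [seq p.1 | p <- r.1.1] in
    let comps := r.1.2 in
    let steps := r.2 in
    [/\ perm_eq out S,
        sorted str_le out,
        [seq p.2 | p <- r.1.1] = lcp_array out,
        comps < LH out + n * up_log K n * k + n + (n.-1 + (K - 2)) %/ K.-1
      & comps + steps <= C * (Dsize S + n * up_log 2 n + n)].
Proof.
move=> k0; exists (k + (4 * 2 ^ k + k + 1) + 1) => S uS nS.
case E: (lcp_mergesort k S) => [[o c] t] /=.
have [V P Sz C Tb] := msort_ok k0 (leqnn _) E.
have [So Lo Ho] := valid0 V.
have HD := LH_le_D uS P.
have Hu : up_log (2 ^ k) (size S) <= up_log 2 (size S).
  apply: up_log_min; first by rewrite -{1}(expn0 2) ltn_exp2l.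
  apply: (leq_trans (up_logP _ (isT : 1 < 2))).
  rewrite -expnM; apply: leq_pexp2l => //; exact: leq_pmull.
rewrite Ho in C.
set u := up_log (2 ^ k) (size S) in C Tb Hu *.
set u2 := up_log 2 (size S) in Hu *.
set L := LH _ in C HD *.
set A := 4 * 2 ^ k + k + 1 in Tb *.
split => //.
- apply: (leq_ltn_trans C).
  rewrite [size S * u * k]mulnC mulnA.
  set w := k * size S * u; set z := _ %/ _; lia.
- have h1 : k * size S * u <= k * (size S * u2) by rewrite -mulnA leq_mul2l leq_mul2l Hu !orbT.
  have h2 : A * size S * u <= A * (size S * u2) by rewrite -mulnA leq_mul2l leq_mul2l Hu !orbT.
  set X := size S * u2 in h1 h2 *; set D := Dsize S in HD *.
  set w1 := k * size S * u in C h1; set w2 := A * size S * u in Tb h2.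
  rewrite !mulnDl !mulnDr; lia.
Qed.
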